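(* The Perfect Split Heuristic $h$ is consistent on $\mathcal G_{\mathcal X,\mathcal Y}$: for every OR node $o$ with terminal child $t$ and AND children $a_1,\dots,a_s$, $$h(o)\le\min_{c\in\{t,a_1,\dots,a_s\}}\big(\mathrm{cost}(o,c)+h(c)\big),$$ and for every AND node $a$ with children $o_0,o_1$, $$h(a)\le\sum_{c\in\{o_0,o_1\}}\big(\mathrm{cost}(a,c)+h(c)\big).$$
   Context: Let $x_1,\dots,x_N\in\{0,1\}^F$ be a binary dataset $\mathcal X$ with labels $\mathcal Y\in\{0,1\}^N$, $[N]=\{1,\dots,N\}$. For $\mathcal I\subseteq[N]$, $f\in[F]$, $k\in\{0,1\}$ let $\mathcal I|_{f=k}=\{i\in\mathcal I:(x_i)_f=k\}$, $c^k(\mathcal I)=|\{i\in\mathcal I:y_i=k\}|$, $\mathcal V(\mathcal I)=\{f:\mathcal I|_{f=0}\neq\emptyset\text{ and }\mathcal I|_{f=1}\neq\emptyset\}$. Fix $\rho^1,\rho^0>0$, $\alpha\in(0,1)$, $\beta\ge0$. Let $\ell_{\rm leaf}(c^1,c^0)=B(c^1+\rho^1,c^0+\rho^0)/B(\rho^1,\rho^0)$ ($B$ the Beta function), $p_{\rm split}(d)=\alpha(1+d)^{-\beta}$, $p_{\rm leaf}(d,\mathcal I)=1$ if $\mathcal V(\mathcal I)=\emptyset$ and $1-p_{\rm split}(d)$ otherwise, $p_{\rm inner}(d,\mathcal I)=0$ if $\mathcal V(\mathcal I)=\emptyset$ and $p_{\rm split}(d)/|\mathcal V(\mathcal I)|$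 otherwise; $-\log0=+\infty$. $\mathcal G_{\mathcal X,\mathcal Y}$: for nonempty $\mathcal I\subseteq[N]$ and $d\in\{0,\dots,F\}$, an OR node $o_{\mathcal I,d}$ with a terminal child $t_{\mathcal I,d}$ via an edge of cost $-\log p_{\rm leaf}(d,\mathcal I)-\log\ell_{\rm leaf}(c^1(\mathcal I),c^0(\mathcal I))$; for $d<F$ and each $f\in\mathcal V(\mathcal I)$ an AND child $a_{\mathcal I,d,f}$ via an edge of cost $-\log p_{\rm inner}(d,\mathcal I)$, and $a_{\mathcal I,d,f}$ has cost-$0$ edges to $o_{\mathcal I|_{f=0},d+1}$ and $o_{\mathcal I|_{f=1},d+1}$; the root is $r=o_{[N],0}$ and only nodes reachable from $r$ are kept. $\mathrm{cost}(u,v)$ denotes the cost of edge $u\to v$. Perfect Split Heuristic: $h(t)=0$ for terminal nodes; $h(o_{\mathcal I,d})=-\max\{\log\ell_{\rm leaf}(c^1(\mathcal I),c^0(\mathcal I)),\ \log p_{\rm split}(d)+\log\ell_{\rm leaf}(c^1(\mathcal I),0)+\log\ell_{\rm leaf}(0,c^0(\mathcal I))\}$; $h(a_{\mathcal I,d,f})=h(o_{\mathcal I|_{f=0},d+1})+h(o_{\mathcal I|_{f=1},d+1})$. *)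

(* Defs.v *)
From HB Require Import structures.
From mathcomp Require Import all_boot all_order all_algebra.
From mathcomp Require Import all_classical all_reals all_analysis.
From Stdlib Require Import Relations.
Set Implicit Arguments.
Unset Strict Implicit.
Unset Printing Implicit Defensive.
Import Order.TTheory GRing.Theory Num.Theory.
Local Open Scope ring_scope.

Definition Beta (R : realType) (a b : R) : R :=
  fine (\int[@lebesgue_measure R]_(t in `]0%R, 1%R[%classic)
          ((t `^ (a - 1)) * ((1 - t) `^ (b - 1)))%:E)%E.

Definition neglog (R : realType) (p : R) : \bar R :=
  if p == 0 then +oo%E else (- ln p)%:E.

Section Graph.
Variables (R : realType) (N F : nat).
Variables (X : 'I_N -> 'I_F -> bool) (Y : 'I_N -> bool).
Variables (rho1 rho0 alpha beta : R).

Definition restr (I : {set 'I_N}) (f : 'I_F) (k : bool) : {set 'I_N} :=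
  finset.finset (fun i => (i \in I) && (X i f == k)).

Definition cnt (k : bool) (I : {set 'I_N}) : nat := #|finset.finset (fun i => (i \in I) && (Y i == k))|.

Definition Vset (I : {set 'I_N}) : {set 'I_F} :=
  finset.finset (fun f => (restr I f false != finset.set0) && (restr I f true != finset.set0)).

Definition ell_leaf (c1 c0 : nat) : R :=
  Beta (c1%:R + rho1) (c0%:R + rho0) / Beta rho1 rho0.

Definition p_split (d : nat) : R := alpha * (1 + d%:R) `^ (- beta).

Definition p_leaf (d : nat) (I : {set 'I_N}) : R :=
  if Vset I == finset.set0 then 1 else 1 - p_split d.

Definition p_inner (d : nat) (I : {set 'I_N}) : R :=
  if Vset I == finset.set0 then 0 else p_split d / #|Vset I|%:R.

Inductive node : Type :=
| OrN  of {set 'I_N} & nat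
| TermN of {set 'I_N} & nat
| AndN of {set 'I_N} & nat & 'I_F.

Definition valid (u : node) : Prop :=
  match u with
  | OrN J d | TermN J d => J != finset.set0 /\ (d <= F)%N
  | AndN J d f => [/\ J != finset.set0, (d < F)%N & f \in Vset J]
  end.

Inductive edge : node -> node -> Prop :=
| edge_leaf I d : I != finset.set0 -> (d <= F)%N -> edge (OrN I d) (TermN I d)
| edge_split I d f : I != finset.set0 -> (d < F)%N -> f \in Vset I ->
    edge (OrN I d) (AndN I d f)
| edge_and0 I d f : I != finset.set0 -> (d < F)%N -> f \in Vset I ->
    edge (AndN I d f) (OrN (restr I f false) d.+1)
| edge_and1 I d f : I != finset.set0 -> (d < F)%N -> f \in Vset I ->
    edge (AndN I d f) (OrN (restr I f true) d.+1).

Definition root : node := OrN (finset.setT : {set 'I_N}) 0.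

Definition in_graph (u : node) : Prop :=
  valid root /\ clos_refl_trans node edge root u.

(** cost(u, v) for an edge u -> v (value irrelevant on non-edges). *)
Definition cost (u v : node) : \bar R :=
  match u, v with
  | OrN J d, TermN _ _ =>
      (neglog (p_leaf d J) + neglog (ell_leaf (cnt true J) (cnt false J)))%E
  | OrN J d, AndN _ _ _ => neglog (p_inner d J)
  | _, _ => 0%E
  end.

Definition h_or (J : {set 'I_N}) (d : nat) : R :=
  - Num.max (ln (ell_leaf (cnt true J) (cnt false J)))
            (ln (p_split d) + ln (ell_leaf (cnt true J) 0)
               + ln (ell_leaf 0 (cnt false J))).

Definition h (u : node) : \bar R :=
  match u with
  | TermN _ _ => 0%E
  | OrN J d => (h_or J d)%:E
  | AndN J d f => (h_or (restr J f false) d.+1 + h_or (restr J f true) d.+1)%:E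
  end.

End Graph.

Arguments OrN {N F} _ _.
Arguments TermN {N F} _ _.
Arguments AndN {N F} _ _ _.

(* Main.v *)
Require Import Defs.
From HB Require Import structures.
From mathcomp Require Import all_boot all_order all_algebra.
From mathcomp Require Import all_classical all_reals all_analysis.
From Stdlib Require Import Relations.
From mathcomp Require Import measurable_realfun ring lra.
Import Order.TTheory GRing.Theory Num.Theory.
Local Open Scope ring_scope.
Local Open Scope classical_set_scope.

Section Ana.
Context (R : realType) (r1 r0 : R) (hr1 : 0 < r1) (hr0 : 0 < r0).
Notation mu := (@lebesgue_measure R).
Definition DD : set (measurableTypeR R) := `]0%R, 1%R[%classic.
Definition wf (t : R) : R := t `^ (r1 - 1) * (1 - t) `^ (r0 - 1).
Definition phi (a b : nat) (t : R) : R := t ^+ a * (1 - t) ^+ b.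

Lemma DDP t : DD t -> 0 < t /\ t < 1.
Proof. by rewrite /DD /= in_itv /= => /andP. Qed.

Lemma mDD : measurable DD.
Proof. exact: measurable_itv. Qed.

Lemma integrand_eq a b t : DD t ->
  t `^ (a%:R + r1 - 1) * (1 - t) `^ (b%:R + r0 - 1) = phi a b t * wf t.
Proof.
move=> /DDP [t0 t1].
have t0' : 0 < 1 - t by rewrite subr_gt0.
rewrite -!addrA (@powRD _ t) ?(gt_eqF t0) ?implybT // (@powRD _ (1 - t)) ?(gt_eqF t0') ?implybT //.
rewrite !powR_mulrn ?ltW // /phi /wf.
by rewrite mulrACA.
Qed.

Lemma mwf : measurable_fun DD wf.
Proof.
apply: measurable_funM.
  exact: measurable_funTS (measurable_powR _).
apply: measurable_funTS.
apply: (measurableT_comp (measurable_powR _)).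
exact: measurable_funB.
Qed.

Lemma mphi a b : measurable_fun DD (phi a b).
Proof.
apply/measurable_funM => //; apply/measurable_funX => //.
exact: measurable_funB.
Qed.

Lemma phi01 a b t : DD t -> 0 <= phi a b t <= 1.
Proof.
move=> /DDP [t0 t1]; apply/andP; split.
  by rewrite mulr_ge0 // exprn_ge0 // ?subr_ge0 ltW.
rewrite mulr_ile1 ?exprn_ge0 ?exprn_ile1 ?subr_ge0 ?ltW //. by rewrite ltrBlDr ltrDl.
Qed.

Lemma wf_gt0 t : DD t -> 0 < wf t.
Proof. move=> /DDP [t0 t1]; by rewrite mulr_gt0 // powR_gt0 // subr_gt0. Qed.


Local Open Scope ereal_scope.
Definition Ie a b := \int[mu]_(t in DD) (phi a b t * wf t)%:E.
Local Close Scope ereal_scope.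

Definition EE (g : R -> R) := Rintegral mu DD (fun t => g t * wf t).

Lemma Beta_eq a b : Beta (a%:R + r1) (b%:R + r0) = EE (phi a b).
Proof.
rewrite /Beta /EE /Rintegral; congr fine; apply: eq_integral => t.
by rewrite inE => Dt; rewrite integrand_eq.
Qed.

Lemma Beta_eq0 : Beta r1 r0 = EE (phi 0 0).
Proof. by rewrite -Beta_eq !add0r. Qed.

Lemma EE_ge0 g : (forall t, DD t -> 0 <= g t) -> 0 <= EE g.
Proof.
move=> g0; apply: Rintegral_ge0 => t Dt.
by rewrite mulr_ge0 // ?g0 // ltW // wf_gt0.
Qed.

Lemma root_ex (a : nat) (c : R) : 0 <= c <= 1 -> (a = 0%N -> c = 1) ->
  exists y, 0 <= y <= 1 /\ y ^+ a = c.
Proof.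
move=> /andP[c0 c1] ha.
case: (posnP a) => [a0|apos].
  by exists 1; rewrite ler01 lexx ha // a0 expr0.
have ya : (c `^ (a%:R^-1)) ^+ a = c.
  rewrite -powR_mulrn ?powR_ge0 // -powRrM mulVf ?powRr1 //.
  by rewrite pnatr_eq0 -lt0n.
exists (c `^ (a%:R^-1)); split => //; rewrite powR_ge0 /=.
rewrite leNgt; apply/negP => y1.
have : 1 < (c `^ (a%:R^-1)) ^+ a by rewrite exprn_egt1 // -lt0n.
by rewrite ya ltNge c1.
Qed.

Lemma sgn_same (x y : R) n m : 0 <= x -> 0 <= y ->
  0 <= (x ^+ n - y ^+ n) * (x ^+ m - y ^+ m).
Proof.
move=> x0 y0; have [xy|yx] := leP x y.
  by apply: mulr_le0; rewrite subr_le0; apply: lerXn2r; rewrite ?nnegrE.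
by apply: mulr_ge0; rewrite subr_ge0; apply: lerXn2r; rewrite ?nnegrE // ltW.
Qed.

Lemma sgn_opp (t y : R) a b : 0 <= t <= 1 -> 0 <= y <= 1 ->
  (t ^+ a - y ^+ a) * ((1 - t) ^+ b - (1 - y) ^+ b) <= 0.
Proof.
move=> /andP[t0 t1] /andP[y0 y1]; have [ty|yt] := leP t y.
  apply: mulr_le0_ge0.
    by rewrite subr_le0; apply: lerXn2r; rewrite ?nnegrE.
  by rewrite subr_ge0; apply: lerXn2r; rewrite ?nnegrE ?subr_ge0 ?lerB.
apply: mulr_ge0_le0.
  by rewrite subr_ge0; apply: lerXn2r; rewrite ?nnegrE // ltW.
by rewrite subr_le0; apply: lerXn2r; rewrite ?nnegrE ?subr_ge0 ?lerB // ltW.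
Qed.

Section Integ.
Hypothesis iw : mu.-integrable DD (EFin \o wf).

Lemma int_gw (g : R -> R) (K : R) : 0 <= K -> measurable_fun DD g ->
  (forall t, DD t -> `|g t| <= K) ->
  mu.-integrable DD (EFin \o (fun t => g t * wf t)).
Proof.
move=> K0 mg gK.
apply: (le_integrable mDD _ _ (integrableZl mDD K iw)).
- apply/measurable_EFinP; apply: measurable_funM => //; exact: mwf.
- move=> t Dt /=; rewrite !normrM lee_fin.
  by rewrite ler_wpM2r // (ger0_norm K0) gK.
Qed.

Lemma int_gw' (g : R -> R) (K : R) : 0 <= K -> measurable_fun DD g ->
  (forall t, DD t -> -K <= g t <= K) ->
  mu.-integrable DD (EFin \o (fun t => g t * wf t)).
Proof.
move=> K0 mg gK; apply: (int_gw _ _ K0 mg) => t Dt; rewrite ler_norml; exact: gK.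
Qed.

Lemma int_phi a b : mu.-integrable DD (EFin \o (fun t => phi a b t * wf t)).
Proof.
apply: (@int_gw' _ 1) => //; first exact: mphi.
move=> t Dt; have /andP[h1 h2] := phi01 a b t Dt; apply/andP; split => //.
by apply: le_trans h1; rewrite lerN10.
Qed.

Lemma cheb_id (u v : R -> R) (c k : R) :
  measurable_fun DD u -> measurable_fun DD v ->
  (forall t, DD t -> 0 <= u t <= 1) -> (forall t, DD t -> 0 <= v t <= 1) ->
  0 <= c <= 1 -> 0 <= k <= 1 ->
  EE (fun t => (u t - c) * (v t - k)) =
  EE (fun t => u t * v t) - c * EE v - k * EE u + c * k * EE (fun _ => 1).
Proof.
move=> mu_ mv u01 v01 /andP[c0 c1] /andP[k0 k1].
have mcst : forall x : R, measurable_fun DD (fun _ : R => x).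
  by move=> x; exact: measurable_cst.
rewrite /EE.
transitivity (Rintegral mu DD (fun t => ((u t * v t - c * v t - k * u t) * wf t)
   + (c * k) * wf t)).
  by apply: eq_Rintegral => t _; ring.
rewrite RintegralD //; first last.
- apply: (@int_gw' _ (c * k)); first by rewrite mulr_ge0.
    exact: mcst.
  by move=> t _; apply/andP; split; nra.
- apply: (@int_gw' _ 3) => //.
    apply: measurable_funB; first apply: measurable_funB.
    + exact: measurable_funM.
    + exact: measurable_funM.
    + exact: measurable_funM.
  move=> t Dt; have /andP[? ?] := u01 t Dt; have /andP[? ?] := v01 t Dt.
  by apply/andP; split; nra.
exact: mDD.
rewrite RintegralZl //; last exact: mDD.
have iu : mu.-integrable DD (EFin \o (fun t => u t * wf t)).
  apply: (@int_gw' _ 1) => // t Dt; have /andP[? ?] := u01 t Dt; lra.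
have iv : mu.-integrable DD (EFin \o (fun t => v t * wf t)).
  apply: (@int_gw' _ 1) => // t Dt; have /andP[? ?] := v01 t Dt; lra.
have iuv : mu.-integrable DD (EFin \o (fun t => (u t * v t) * wf t)).
  apply: (@int_gw' _ 1) => //; first exact: measurable_funM.
  move=> t Dt; have /andP[? ?] := u01 t Dt; have /andP[? ?] := v01 t Dt.
  by apply/andP; split; nra.
have iuvc : mu.-integrable DD (EFin \o (fun t => (u t * v t - c * v t) * wf t)).
  apply: (@int_gw' _ 2) => //.
    apply: measurable_funB; first exact: measurable_funM.
    exact: measurable_funM.
  move=> t Dt; have /andP[? ?] := u01 t Dt; have /andP[? ?] := v01 t Dt.
  by apply/andP; split; nra.
transitivity (Rintegral mu DD (fun t => ((u t * v t - c * v t) * wf t)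
   - k * (u t * wf t)) + c * k * Rintegral mu DD (fun t => wf t)).
  by congr (_ + _); apply: eq_Rintegral => t _; ring.
rewrite RintegralB //; first last.
- apply: (eq_integrable mDD _ _ _ (integrableZl mDD k iu)) => t _ /=.
  by rewrite EFinM.
- exact: mDD.
rewrite RintegralZl //; last exact: mDD.
transitivity (Rintegral mu DD (fun t => (u t * v t) * wf t - c * (v t * wf t))
   - k * Rintegral mu DD (fun t => u t * wf t)
   + c * k * Rintegral mu DD (fun t => wf t)).
  by congr (_ - _ + _); apply: eq_Rintegral => t _; ring.
rewrite RintegralB //; first last.
- apply: (eq_integrable mDD _ _ _ (integrableZl mDD c iv)) => t _ /=.
  by rewrite EFinM.
- exact: mDD.
rewrite RintegralZl //; last exact: mDD.
congr (_ - _ - _ + _ * _).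
by apply: eq_Rintegral => t _; rewrite mul1r.
Qed.


Lemma EE_le0 g : mu.-integrable DD (EFin \o (fun t => g t * wf t)) ->
  (forall t, DD t -> g t <= 0) -> EE g <= 0.
Proof.
move=> ig g0.
have -> : 0 = EE (fun _ => 0).
  rewrite /EE; under eq_Rintegral do rewrite mul0r.
  by rewrite Rintegral_cst ?mul0r //; exact: mDD.
apply: le_Rintegral; [exact: mDD | exact: ig | | ].
  apply: (@int_gw' _ 0) => //; last by move=> t _; rewrite oppr0 lexx.
move=> t Dt; rewrite mul0r; apply: mulr_le0_ge0; first exact: g0.
exact/ltW/wf_gt0.
Qed.

Lemma cheb_main (u v : R -> R) (c k : R) (sg : bool) :
  measurable_fun DD u -> measurable_fun DD v ->
  (forall t, DD t -> 0 <= u t <= 1) -> (forall t, DD t -> 0 <= v t <= 1) ->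
  0 <= c <= 1 -> 0 <= k <= 1 -> 0 < EE (fun _ => 1) ->
  c * EE (fun _ => 1) = EE u ->
  (forall t, DD t -> (-1) ^+ sg * ((u t - c) * (v t - k)) <= 0) ->
  (-1) ^+ sg * (EE (fun t => u t * v t) * EE (fun _ => 1)) <=
  (-1) ^+ sg * (EE u * EE v).
Proof.
move=> mu_ mv u01 v01 c01 k01 E1 cE hs.
have hid := cheb_id _ _ _ _ mu_ mv u01 v01 c01 k01.
have hX : EE (fun t => (-1) ^+ sg * ((u t - c) * (v t - k))) <= 0.
  apply: EE_le0 => //.
  apply: (@int_gw' _ 1) => //.
    apply: measurable_funM; first exact: measurable_cst.
    by apply: measurable_funM; apply: measurable_funB => //;
      exact: measurable_cst.
  move=> t Dt; have /andP[? ?] := u01 t Dt; have /andP[? ?] := v01 t Dt.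
  move: c01 k01 => /andP[? ?] /andP[? ?].
  by case: (sg) => /=; rewrite ?expr1 ?expr0; apply/andP; split; nra.
have eX : EE (fun t => (-1) ^+ sg * ((u t - c) * (v t - k))) =
   (-1) ^+ sg * EE (fun t => (u t - c) * (v t - k)).
  rewrite /EE -RintegralZl; last 2 first.
  - exact: mDD.
  - apply: (@int_gw' _ 1) => //.
      by apply: measurable_funM; apply: measurable_funB => //;
        exact: measurable_cst.
    move=> t Dt; have /andP[? ?] := u01 t Dt; have /andP[? ?] := v01 t Dt.
    move: c01 k01 => /andP[? ?] /andP[? ?].
    by apply/andP; split; nra.
  by apply: eq_Rintegral => t _; rewrite mulrA.
rewrite eX hid -cE in hX.
rewrite -cE.
set A := EE (fun t => u t * v t) in hX *.
set E := EE (fun _ => 1) in hX E1 *.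
set V := EE v in hX *.
have H : (-1) ^+ sg * (A - c * V - k * (c * E) + c * k * E) * E <= 0.
  by apply: mulr_le0_ge0 => //; exact: (ltW E1).
clear hs eX; move: H hX; case: sg => H hX; rewrite ?expr1 ?expr0 in H hX *; nra.
Qed.

Lemma EE_gt0 g : mu.-integrable DD (EFin \o (fun t => g t * wf t)) ->
  (forall t, DD t -> 0 < g t) -> 0 < EE g.
Proof.
move=> ig g0.
have ge0 : 0 <= EE g by apply: EE_ge0 => t Dt; exact/ltW/g0.
rewrite lt_neqAle ge0 andbT; apply/eqP => e0.
have fin := integrable_fin_num mDD ig.
have i0 : (\int[mu]_(x in DD) (EFin \o (fun t => (g t * wf t)%R)) x = 0)%E.
  by rewrite -(fineK fin); congr EFin; rewrite e0.
have i0' : (\int[mu]_(x in DD) `| (EFin \o (fun t => (g t * wf t)%R)) x | = 0)%E.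
  rewrite -i0; apply: eq_integral => t; rewrite inE => Dt /=.
  by rewrite ger0_norm // mulr_ge0 // ltW // ?g0 ?wf_gt0.
have mf : measurable_fun DD (EFin \o (fun t => g t * wf t)).
  by case/integrableP: ig.
have := (ae_eq_integral_abs mu mDD mf).1 i0'.
case=> N [mN muN sub].
have : mu DD = 0%E.
  apply: (subset_measure0 _ _ _ muN) => //; first exact: mDD.
  move=> t Dt; apply: sub => /= /(_ Dt) [].
  by move/eqP; rewrite mulf_eq0 (gt_eqF (g0 t Dt)) (gt_eqF (wf_gt0 t Dt)).
rewrite /DD lebesgue_measure_itv /=. by rewrite lte_fin ltr01 oppr0 adde0 => /eqP; rewrite onee_eq0.
Qed.

Lemma c_props (g : R -> R) : measurable_fun DD g -> (forall t, DD t -> 0 <= g t <= 1) ->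
  0 < EE (fun _ => 1) ->
  0 <= EE g / EE (fun _ => 1) <= 1 /\ EE g / EE (fun _ => 1) * EE (fun _ => 1) = EE g.
Proof.
move=> mg g01 E1.
have i1 : mu.-integrable DD (EFin \o (fun t => (fun _ : R => 1) t * wf t)).
  apply: (@int_gw' _ 1) => //; last by move=> t _; lra.
have ig : mu.-integrable DD (EFin \o (fun t => g t * wf t)).
  apply: (@int_gw' _ 1) => // t Dt; have /andP[? ?] := g01 t Dt; lra.
split; last by rewrite mulfVK // gt_eqF.
rewrite divr_ge0 ?(ltW E1) ?EE_ge0 //=; last first.
  by move=> t Dt; have /andP[] := g01 t Dt.
rewrite ler_pdivrMr // mul1r.
apply: le_Rintegral => //; first exact: mDD.
move=> t Dt; apply: ler_wpM2r; first exact/ltW/wf_gt0.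
by have /andP[] := g01 t Dt.
Qed.

Lemma EE00 : EE (phi 0 0) = EE (fun _ => 1).
Proof. by apply: eq_Rintegral => t _; rewrite /phi !expr0 mulr1. Qed.

Lemma cheb1 a b : 0 < EE (fun _ => 1) ->
  EE (phi a b) * EE (fun _ => 1) <= EE (phi a 0) * EE (phi 0 b).
Proof.
move=> E1.
have [c01 cE] := c_props _ (mphi a 0) (phi01 a 0) E1.
set c := EE (phi a 0) / EE (fun _ => 1) in c01 cE.
have a0c : a = 0%N -> c = 1.
  by move=> a0; rewrite /c a0 EE00 divff // gt_eqF.
have [y [y01 ya]] := root_ex _ _ c01 a0c.
have k01 : 0 <= (1 - y) ^+ b <= 1.
  move: y01 => /andP[? ?]; rewrite exprn_ge0 ?subr_ge0 //= exprn_ile1 //.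
    by rewrite subr_ge0.
  by rewrite gerBl.
have := cheb_main _ _ _ _ false (mphi a 0) (mphi 0 b) (phi01 a 0) (phi01 0 b)
  c01 k01 E1 cE.
rewrite expr0 !mul1r.
have -> : EE (fun t => phi a 0 t * phi 0 b t) = EE (phi a b).
  by apply: eq_Rintegral => t _; rewrite /phi !expr0 mulr1 mul1r.
apply => t Dt; rewrite mul1r /phi !expr0 mulr1 mul1r -ya.
have [t0 t1] := DDP t Dt.
by apply: sgn_opp => //; rewrite !ltW.
Qed.

Lemma cheb2 a b : 0 < EE (fun _ => 1) ->
  EE (phi a 0) * EE (phi b 0) <= EE (phi (a + b) 0) * EE (fun _ => 1).
Proof.
move=> E1.
have [c01 cE] := c_props _ (mphi a 0) (phi01 a 0) E1.
set c := EE (phi a 0) / EE (fun _ => 1) in c01 cE.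
have a0c : a = 0%N -> c = 1.
  by move=> a0; rewrite /c a0 EE00 divff // gt_eqF.
have [y [y01 ya]] := root_ex _ _ c01 a0c.
have k01 : 0 <= y ^+ b <= 1.
  by move: y01 => /andP[? ?]; rewrite exprn_ge0 //= exprn_ile1.
have := cheb_main _ _ _ _ true (mphi a 0) (mphi b 0) (phi01 a 0) (phi01 b 0)
  c01 k01 E1 cE.
rewrite !mulN1r lerN2.
have -> : EE (fun t => phi a 0 t * phi b 0 t) = EE (phi (a + b) 0).
  by apply: eq_Rintegral => t _; rewrite /phi !expr0 !mulr1 exprD.
apply => t Dt; rewrite (_ : (-1 : R) ^+ true = -1) // mulN1r oppr_le0 /phi !expr0 !mulr1 -ya.
have [t0 t1] := DDP t Dt.
by move: y01 => /andP[y0 _]; apply: sgn_same => //; exact: ltW.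
Qed.

Lemma cheb3 a b : 0 < EE (fun _ => 1) ->
  EE (phi 0 a) * EE (phi 0 b) <= EE (phi 0 (a + b)) * EE (fun _ => 1).
Proof.
move=> E1.
have [c01 cE] := c_props _ (mphi 0 a) (phi01 0 a) E1.
set c := EE (phi 0 a) / EE (fun _ => 1) in c01 cE.
have a0c : a = 0%N -> c = 1.
  by move=> a0; rewrite /c a0 EE00 divff // gt_eqF.
have [y [y01 ya]] := root_ex _ _ c01 a0c.
have k01 : 0 <= y ^+ b <= 1.
  by move: y01 => /andP[? ?]; rewrite exprn_ge0 //= exprn_ile1.
have := cheb_main _ _ _ _ true (mphi 0 a) (mphi 0 b) (phi01 0 a) (phi01 0 b)
  c01 k01 E1 cE.
rewrite !mulN1r lerN2.
have -> : EE (fun t => phi 0 a t * phi 0 b t) = EE (phi 0 (a + b)).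
  by apply: eq_Rintegral => t _; rewrite /phi !expr0 !mul1r exprD.
apply => t Dt; rewrite (_ : (-1 : R) ^+ true = -1) // mulN1r oppr_le0 /phi !expr0 !mul1r -ya.
have [t0 t1] := DDP t Dt.
by move: y01 => /andP[y0 _]; apply: sgn_same => //; rewrite subr_ge0 ltW.
Qed.

End Integ.

Lemma ln_mono4 (x y z w : R) : 0 < x -> 0 < y -> 0 < z -> 0 < w ->
  x * y <= z * w -> ln x + ln y <= ln z + ln w.
Proof.
move=> x0 y0 z0 w0 h.
by rewrite -!lnM ?posrE // ler_ln ?posrE ?mulr_gt0.
Qed.

Lemma keyL :
  (forall a b, ln (ell_leaf r1 r0 a b) <=
       ln (ell_leaf r1 r0 a 0) + ln (ell_leaf r1 r0 0 b)) /\
  (forall a b, ln (ell_leaf r1 r0 a 0) + ln (ell_leaf r1 r0 b 0) <=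
       ln (ell_leaf r1 r0 (a + b) 0)) /\
  (forall a b, ln (ell_leaf r1 r0 0 a) + ln (ell_leaf r1 r0 0 b) <=
       ln (ell_leaf r1 r0 0 (a + b))).
Proof.
have ellE a b : ell_leaf r1 r0 a b = EE (phi a b) / EE (fun _ => 1).
  by rewrite /ell_leaf Beta_eq Beta_eq0 EE00.
have [E1|E1] := ltP 0 (EE (fun _ => 1)); last first.
  have E0 : EE (fun _ => 1) = 0.
    apply/eqP; rewrite eq_le E1 /=; apply: EE_ge0 => t _; exact: ler01.
  have l0 a b : ln (ell_leaf r1 r0 a b) = 0 by rewrite ellE E0 invr0 mulr0 ln0.
  by split; [|split] => a b; rewrite !l0 !addr0 lexx.
have iw : mu.-integrable DD (EFin \o wf).
  apply/integrableP; split; first by apply/measurable_EFinP; exact: mwf.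
  have fin : (\int[mu]_(t in DD) (((fun _ => 1) t * wf t)%:E))%E \is a fin_num.
    apply: contraTT E1; rewrite fin_numE negb_and !negbK => /orP[] /eqP e;
      by rewrite /EE /Rintegral e /= ltxx.
  have -> : (\int[mu]_(x in DD) `|(EFin \o wf) x|)%E =
      (\int[mu]_(t in DD) (((fun _ => 1) t * wf t)%:E))%E.
    apply: eq_integral => t; rewrite inE => Dt /=.
    by rewrite mul1r ger0_norm // ltW // wf_gt0.
  by rewrite ltey_eq fin.
have Ep a b : 0 < EE (phi a b).
  apply: EE_gt0 => //; first exact: int_phi.
  move=> t Dt; have [t0 t1] := DDP t Dt.
  by rewrite /phi mulr_gt0 // exprn_gt0 // subr_gt0.
have lnE a b : ln (ell_leaf r1 r0 a b) = ln (EE (phi a b)) - ln (EE (fun _ => 1)).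
  by rewrite ellE ln_div ?posrE.
split; [|split] => a b; rewrite !lnE.
- have := ln_mono4 _ _ _ _ (Ep a b) E1 (Ep a 0) (Ep 0 b) (cheb1 iw a b E1); lra.
- have := ln_mono4 _ _ _ _ (Ep a 0) (Ep b 0) (Ep (a + b) 0) E1 (cheb2 iw a b E1); lra.
- have := ln_mono4 _ _ _ _ (Ep 0 a) (Ep 0 b) (Ep 0 (a + b)) E1 (cheb3 iw a b E1); lra.
Qed.

End Ana.

Local Close Scope classical_set_scope.

Section Comb.
Context (R : realType) (N F : nat) (X : 'I_N -> 'I_F -> bool) (Y : 'I_N -> bool).

Lemma cnt_split k (I : {set 'I_N}) f :
  cnt Y k I = (cnt Y k (restr X I f false) + cnt Y k (restr X I f true))%N.
Proof.
rewrite /cnt -(cardsID [set i | X i f]) addnC; congr (_ + _)%N;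
  apply: eq_card => i; rewrite !inE; case: (X i f); rewrite ?andbT ?andbF //=.
Qed.

End Comb.

Lemma p_split_pos (R : realType) (alpha beta : R) d :
  0 < alpha -> alpha < 1 -> 0 <= beta ->
  0 < p_split alpha beta d /\ p_split alpha beta d <= 1.
Proof.
move=> a0 a1 b0.
have d0 : 0 < 1 + d%:R :> R by have := ler0n R d; lra.
split; first by rewrite /p_split mulr_gt0 // powR_gt0.
rewrite /p_split /powR gt_eqF //.
have : expR (- beta * ln (1 + d%:R)) <= 1.
  rewrite -[X in _ <= X]expR0 ler_expR mulNr oppr_le0; apply: mulr_ge0 => //.
  by apply: ln_ge0; rewrite lerDl.
have : 0 < expR (- beta * ln (1 + d%:R)) by apply: expR_gt0.
nra.
Qed.

Section Heur.
Context (R : realType) (N : nat) (Y : 'I_N -> bool) (rho1 rho0 alpha beta : R).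
Hypotheses (hr1 : 0 < rho1) (hr0 : 0 < rho0) (ha0 : 0 < alpha) (ha1 : alpha < 1)
  (hb : 0 <= beta).

Notation L a b := (ln (ell_leaf rho1 rho0 a b)).

Lemma hA J d : h_or Y rho1 rho0 alpha beta J d <= - L (cnt Y true J) (cnt Y false J).
Proof. by rewrite /h_or lerN2 le_max lexx. Qed.

Lemma hB J d : h_or Y rho1 rho0 alpha beta J d <=
  - (ln (p_split alpha beta d) + L (cnt Y true J) 0 + L 0 (cnt Y false J)).
Proof. by rewrite /h_or lerN2 le_max lexx orbT. Qed.

Lemma hC J d : - (L (cnt Y true J) 0 + L 0 (cnt Y false J)) <=
  h_or Y rho1 rho0 alpha beta J d.
Proof.
rewrite /h_or lerN2 ge_max; apply/andP; split.
  have [K _] := keyL R rho1 rho0.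
  exact: (K _ _).
have [p0 p1] := p_split_pos _ _ _ d ha0 ha1 hb.
by rewrite -addrA gerDr ln_le0.
Qed.

End Heur.

Lemma lin_comb (R : realType) (h p v A B A1 A2 B1 B2 h0 h1 : R) :
  h <= -(p + A + B) -> -(A1 + B1) <= h0 -> -(A2 + B2) <= h1 ->
  A1 + A2 <= A -> B1 + B2 <= B -> 0 <= v -> h <= -(p - v) + (h0 + h1).
Proof. move=> *; lra. Qed.

Lemma and_help (R : realType) (x y : R) :
  ((x + y)%:E <= (0 + x%:E) + (0 + y%:E))%E.
Proof. by rewrite !add0e. Qed.

Lemma leaf_help (R : realType) (hv pv lv : R) : hv <= - ln lv -> pv <= 1 ->
  ((hv)%:E <= neglog pv + neglog lv + 0)%E.
Proof.
move=> h1 p1; rewrite adde0 /neglog.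
case: ifP => _; case: ifP => _ /=; rewrite ?leey //.
rewrite lee_fin; apply: (le_trans h1).
by rewrite lerDr oppr_ge0 ln_le0.
Qed.

Lemma split_help (R : realType) (q hv p v h0 h1 : R) : q = p / v ->
  0 < p -> 0 < v -> hv <= -(ln p - ln v) + (h0 + h1) ->
  (hv%:E <= neglog q + (h0 + h1)%:E)%E.
Proof.
move=> -> p0 v0 hle.
by rewrite /neglog gt_eqF ?divr_gt0 // -EFinD lee_fin ln_div ?posrE.
Qed.

Arguments leaf_help {R hv pv lv}.
Arguments split_help {R q hv p v h0 h1}.
Arguments lin_comb {R h p v A B A1 A2 B1 B2 h0 h1}.

Theorem theorem8 (R : realType) (N F : nat)
    (X : 'I_N -> 'I_F -> bool) (Y : 'I_N -> bool)
    (rho1 rho0 alpha beta : R) :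
  0 < rho1 -> 0 < rho0 -> 0 < alpha -> alpha < 1 -> 0 <= beta ->
  let G := in_graph X in
  let hh := h X Y rho1 rho0 alpha beta in
  let cst := cost X Y rho1 rho0 alpha beta in
  (* OR nodes: h(o) <= cost(o,c) + h(c) for every child c (i.e. <= the min) *)
  (forall (I : {set 'I_N}) (d : nat) (c : node N F),
      G (OrN I d) -> edge X (OrN I d) c ->
      (hh (OrN I d) <= cst (OrN I d) c + hh c)%E) /\
  (* AND nodes: h(a) <= sum over its two children of cost(a,c) + h(c) *)
  (forall (I : {set 'I_N}) (d : nat) (f : 'I_F),
      G (AndN I d f) ->
      let a := AndN I d f in
      let o0 := OrN (restr X I f false) d.+1 in
      let o1 := OrN (restr X I f true) d.+1 in
      (hh a <= (cst a o0 + hh o0) + (cst a o1 + hh o1))%E).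
Proof.
move=> hr1 hr0 ha0 ha1 hb G hh cst; split; last first.
  move=> I d f _; cbv zeta; rewrite /hh /cst /=.
  exact: and_help.
move=> I d c _ e; rewrite /hh /cst.
inversion e; subst.
- have pl1 : p_leaf X alpha beta d I <= 1.
    rewrite /p_leaf; case: ifP => _ //.
    have [p0 _] := p_split_pos _ _ _ d ha0 ha1 hb.
    by rewrite gerBl ltW.
  exact: (leaf_help (hA _ _ _ _ _ _ _ I d) pl1).
- have V0 : Vset X I != finset.set0 by apply/set0Pn; exists f.
  have [p0 p1] := p_split_pos _ _ _ d ha0 ha1 hb.
  have Vp : 0 < #|Vset X I|%:R :> R.
    by rewrite ltr0n; apply/card_gt0P; exists f.
  have eq : p_inner X alpha beta d I = p_split alpha beta d / #|Vset X I|%:R.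
    by rewrite /p_inner (negbTE V0).
  apply: (split_help eq p0 Vp).
  have [_ [K2 K3]] := keyL R rho1 rho0.
  apply: (lin_comb (hB _ _ _ _ _ _ _ I d)
    (hC _ _ _ _ _ _ _ ha0 ha1 hb (restr X I f false) d.+1)
    (hC _ _ _ _ _ _ _ ha0 ha1 hb (restr X I f true) d.+1)).
  + by rewrite [cnt Y true I](cnt_split _ _ X Y true I f) K2.
  + by rewrite [cnt Y false I](cnt_split _ _ X Y false I f) K3.
  + by apply: ln_ge0; rewrite ler1n; apply/card_gt0P; exists f.
Qed.
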